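(* Let $\varphi$ be an $\mathrm{SLTL}$ formula whose standpoint symbols other than $*$ are $s_1,\dots,s_n$ (treated as propositional variables in $\mathrm{PTL}\times\mathbf{S5}$, distinct from those of $\varphi$). Let $t_2$ be the translation that is the identity on propositional variables, commutes with Boolean connectives and with $X$ and $U$, and satisfies $t_2(\Diamond_*\psi)=\Diamond t_2(\psi)$, $t_2(\Box_*\psi)=\Box t_2(\psi)$, $t_2(\Diamond_s\psi)=\Diamond(s\wedge t_2(\psi))$, $t_2(\Box_s\psi)=\Box(s\to t_2(\psi))$, and $t_2(s\preceq s')=\Box(s\to s')$ for standpoint symbols $s,s'$. Let $\chi_n=\bigwedge_{1\le i\le n}\Diamond s_i\wedge\Box\bigwedge_{1\le i\le n}(G s_i\vee G\neg s_i)$, where $G\psi$ abbreviates ''always in the future'' $\neg(\top\,U\,\neg\psi)$. Then $\varphi$ is $\mathrm{SLTL}$-satisfiable if and only if $\chi_n\wedge t_2(\varphi)$ is $\mathrm{PTL}\times\mathbf{S5}$-satisfiable.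
   Context: Fix a countably infinite set $\mathcal{P}$ of propositional variables and a countably infinite set $\mathcal{S}$ of standpoint symbols containing a distinguished universal standpoint symbol $*$. SLTL: formulae $\varphi ::= p \mid s \preceq s' \mid \neg\varphi \mid \varphi\wedge\varphi \mid \Diamond_s\varphi \mid \Box_s\varphi \mid X\varphi \mid \varphi\,U\,\varphi$ ($p\in\mathcal{P}$, $s,s'\in\mathcal{S}$). A model is $M=(\Pi,\lambda)$, $\Pi\neq\emptyset$ a set of traces $\sigma:\mathbb{N}\to 2^{\mathcal{P}}$, $\lambda:\mathcal{S}\to 2^{\Pi}\setminus\{\emptyset\}$ with $\lambda( * )=\Pi$. Semantics: $M,\sigma,i\models p$ iff $p\in\sigma(i)$; $M,\sigma,i\models s\preceq s'$ iff $\lambda(s)\subseteq\lambda(s')$; Boolean clauses as usual; $M,\sigma,i\models\Diamond_s\psi$ iff $M,\sigma',i\models\psi$ for some $\sigma'\in\lambda(s)$; $\Box_s$ dually with ''for all''; $M,\sigma,i\models X\psi$ iff $M,\sigma,i+1\models\psi$; $M,\sigma,i\models\psi\,U\,\chi$ iff there is $i'\ge i$ with $M,\sigma,i'\models\chi$ and $M,\sigma,i''\models\psi$ for all $i\le i''<i'$. $\varphi$ is SLTL-satisfiable iff $M,\sigma,0\models\varphi$ for some $M=(\Pi,\lambda)$ and $\sigma\in\Pi$. $\mathrm{PTL}\times\mathbf{S5}$: formulae $\varphi ::= p \mid \neg\varphi\mid\varphi\wedge\varphi\mid\Diamond\varphi\mid\Box\varphi\mid X\varphi\mid\varphi\,U\,\varphi$.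 A model is $M=(\mathbb{N}\times W,R,L)$ with $W\neq\emptyset$, $R$ an equivalence relation on $W$, $L:\mathbb{N}\times W\to 2^{\mathcal{P}}$. Semantics: $M,(n,w)\models p$ iff $p\in L(n,w)$; $\Diamond\psi$ (resp. $\Box\psi$) holds at $(n,w)$ iff $\psi$ holds at $(n,w')$ for some (resp. all) $w'$ with $wRw'$; $X\psi$ holds at $(n,w)$ iff $\psi$ holds at $(n+1,w)$; $\psi\,U\,\chi$ holds at $(n,w)$ iff there is $n'\ge n$ with $\chi$ at $(n',w)$ and $\psi$ at $(n'',w)$ for all $n\le n''<n'$. A formula is satisfiable iff it holds at some point of some model. *)

(* Defs.v *)
From Stdlib Require Import List Arith.
Import ListNotations.

Inductive stand : Type := Star | Sp (n : nat).

Inductive sltl : Type :=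
| SVar (p : nat)
| SPrec (s s' : stand)
| SNot (f : sltl)
| SAnd (f g : sltl)
| SDia (s : stand) (f : sltl)
| SBox (s : stand) (f : sltl)
| SX (f : sltl)
| SU (f g : sltl).

(** Traces: [sigma i p] means p is in sigma(i). *)
Definition trace := nat -> nat -> Prop.

Fixpoint ssat (lam : stand -> trace -> Prop) (f : sltl) (sigma : trace) (i : nat) : Prop :=
  match f with
  | SVar p => sigma i p
  | SPrec s s' => forall tau, lam s tau -> lam s' tau
  | SNot g => ~ ssat lam g sigma i
  | SAnd g h => ssat lam g sigma i /\ ssat lam h sigma i
  | SDia s g => exists sigma', lam s sigma' /\ ssat lam g sigma' i
  | SBox s g => forall sigma', lam s sigma' -> ssat lam g sigma' i
  | SX g => ssat lam g sigma (S i)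
  | SU g h => exists i', i <= i' /\ ssat lam h sigma i' /\
                 (forall i'', i <= i'' < i' -> ssat lam g sigma i'')
  end.

Definition sltl_model (Pi : trace -> Prop) (lam : stand -> trace -> Prop) : Prop :=
  (exists sigma, Pi sigma) /\
  (forall s, (forall tau, lam s tau -> Pi tau) /\ (exists tau, lam s tau)) /\
  (forall tau, lam Star tau <-> Pi tau).

Definition sltl_satisfiable (f : sltl) : Prop :=
  exists (Pi : trace -> Prop) (lam : stand -> trace -> Prop) (sigma : trace),
    sltl_model Pi lam /\ Pi sigma /\ ssat lam f sigma 0.

Inductive ptl (V : Type) : Type :=
| PVar (v : V)
| PNot (f : ptl V)
| PAnd (f g : ptl V)
| PDia (f : ptl V)
| PBox (f : ptl V)
| PX (f : ptl V)
| PU (f g : ptl V).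
Arguments PVar {V} v.
Arguments PNot {V} f.
Arguments PAnd {V} f g.
Arguments PDia {V} f.
Arguments PBox {V} f.
Arguments PX {V} f.
Arguments PU {V} f g.

Fixpoint psat {V W : Type} (R : W -> W -> Prop) (L : nat -> W -> V -> Prop)
    (f : ptl V) (n : nat) (w : W) : Prop :=
  match f with
  | PVar v => L n w v
  | PNot g => ~ psat R L g n w
  | PAnd g h => psat R L g n w /\ psat R L h n w
  | PDia g => exists w', R w w' /\ psat R L g n w'
  | PBox g => forall w', R w w' -> psat R L g n w'
  | PX g => psat R L g (S n) w
  | PU g h => exists n', n <= n' /\ psat R L h n' w /\
                (forall n'', n <= n'' < n' -> psat R L g n'' w)
  end.

Definition equivalence_rel {W : Type} (R : W -> W -> Prop) : Prop :=
  (forall x, R x x) /\ (forall x y, R x y -> R y x) /\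
  (forall x y z, R x y -> R y z -> R x z).

Definition ptl_satisfiable {V : Type} (f : ptl V) : Prop :=
  exists (W : Type) (R : W -> W -> Prop) (L : nat -> W -> V -> Prop) (n : nat) (w : W),
    equivalence_rel R /\ psat R L f n w.

(** * Translation. Target variables: [inl p] for the variable p of the SLTL
    formula, [inr k] for the standpoint symbol [Sp k]. *)
Definition tvar := (nat + nat)%type.

Definition ptrue : ptl tvar := PNot (PAnd (PVar (inl 0)) (PNot (PVar (inl 0)))).
Definition pimp (a b : ptl tvar) : ptl tvar := PNot (PAnd a (PNot b)).
Definition por (a b : ptl tvar) : ptl tvar := PNot (PAnd (PNot a) (PNot b)).
Definition pG (a : ptl tvar) : ptl tvar := PNot (PU ptrue (PNot a)).

Definition stand_atom (s : stand) : ptl tvar :=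
  match s with Star => ptrue | Sp k => PVar (inr k) end.

Fixpoint t2 (f : sltl) : ptl tvar :=
  match f with
  | SVar p => PVar (inl p)
  | SPrec s s' => PBox (pimp (stand_atom s) (stand_atom s'))
  | SNot g => PNot (t2 g)
  | SAnd g h => PAnd (t2 g) (t2 h)
  | SDia Star g => PDia (t2 g)
  | SDia (Sp k) g => PDia (PAnd (PVar (inr k)) (t2 g))
  | SBox Star g => PBox (t2 g)
  | SBox (Sp k) g => PBox (pimp (PVar (inr k)) (t2 g))
  | SX g => PX (t2 g)
  | SU g h => PU (t2 g) (t2 h)
  end.

Definition stand_syms (s : stand) : list nat :=
  match s with Star => [] | Sp k => [k] end.

Fixpoint syms (f : sltl) : list nat :=
  match f with
  | SVar _ => []
  | SPrec s s' => stand_syms s ++ stand_syms s'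
  | SNot g | SX g => syms g
  | SAnd g h | SU g h => syms g ++ syms h
  | SDia s g | SBox s g => stand_syms s ++ syms g
  end.

Definition symbols (f : sltl) : list nat := nodup Nat.eq_dec (syms f).

Definition bigand (l : list (ptl tvar)) : ptl tvar := fold_right PAnd ptrue l.

Definition chi (ks : list nat) : ptl tvar :=
  PAnd (bigand (map (fun k => PDia (PVar (inr k))) ks))
       (PBox (bigand (map (fun k => por (pG (PVar (inr k))) (pG (PNot (PVar (inr k))))) ks))).

(* Main.v *)
Require Import Defs.
From Stdlib Require Import List Arith Lia Classical.
Import ListNotations.

Lemma psat_bigand {W} (R : W -> W -> Prop) L l n (w:W) :
  psat R L (bigand l) n w <-> (forall f, In f l -> psat R L f n w).
Proof.
  induction l; simpl.
  - split; [intros _ f []| intros _; tauto].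
  - rewrite IHl. split; [intros [H1 H2] f [<-|Hf]; auto | intros H; split; auto].
Qed.

Lemma psat_por {W} (R : W -> W -> Prop) L a b n (w:W) :
  psat R L (por a b) n w <-> psat R L a n w \/ psat R L b n w.
Proof. simpl. destruct (classic (psat R L a n w)); tauto. Qed.

Lemma psat_pimp {W} (R : W -> W -> Prop) L a b n (w:W) :
  psat R L (pimp a b) n w <-> (psat R L a n w -> psat R L b n w).
Proof. simpl. destruct (classic (psat R L b n w)); tauto. Qed.

Lemma psat_pG {W} (R : W -> W -> Prop) L a n (w:W) :
  psat R L (pG a) n w <-> (forall m, n <= m -> psat R L a m w).
Proof.
  simpl. split.
  - intros H m Hm. apply NNPP. intro Hn. apply H. exists m. split; [lia|].
    split; [exact Hn|]. intros; tauto.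
  - intros H [m [Hm [Hn _]]]. apply Hn. auto.
Qed.

Fixpoint mv (f : sltl) : nat :=
  match f with
  | SVar p => p
  | SPrec _ _ => 0
  | SNot g | SX g | SDia _ g | SBox _ g => mv g
  | SAnd g h | SU g h => max (mv g) (mv h)
  end.

Lemma fwd phi : sltl_satisfiable phi -> ptl_satisfiable (PAnd (chi (symbols phi)) (t2 phi)).
Proof.
  intros (Pi & lam & sigma & [Hne [Hs Hstar]] & HPi & Hsat).
  pose (W := {tau | Pi tau}).
  pose (L := fun (m:nat) (x:W) (v:tvar) => match v with inl p => proj1_sig x m p
                                   | inr k => lam (Sp k) (proj1_sig x) end).
  exists W, (fun _ _ => True), L, 0, (exist _ sigma HPi).
  assert (atom : forall s i (x:W), psat (fun _ _ => True) L (stand_atom s) i x <-> lam s (proj1_sig x)).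
  { intros [|k] i x; simpl.
    - rewrite Hstar. destruct x; simpl; tauto.
    - tauto. }
  assert (main : forall psi i (x:W), psat (fun _ _ => True) L (t2 psi) i x <-> ssat lam psi (proj1_sig x) i).
  { induction psi; intros i x.
    - simpl. tauto.
    - cbn [t2 psat ssat]. split.
      + intros H tau Hl. pose proof (proj1 (Hs s) tau Hl) as Ht.
        specialize (H (exist _ tau Ht) I). rewrite (psat_pimp _ _ _ _ _ _) in H.
        rewrite !atom in H. simpl in H. auto.
      + intros H x' _. apply psat_pimp. rewrite !atom. auto.
    - simpl. rewrite IHpsi. tauto.
    - simpl. rewrite IHpsi1, IHpsi2. tauto.
    - destruct s; simpl.
      + split.
        * intros [x' [_ H]]. exists (proj1_sig x'). rewrite IHpsi in H.
          split; auto. apply Hstar. apply proj2_sig.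
        * intros [tau [Hl H]]. apply Hstar in Hl. exists (exist _ tau Hl). split; auto.
          apply IHpsi. exact H.
      + split.
        * intros [x' [_ [Hk H]]]. exists (proj1_sig x'). rewrite IHpsi in H. auto.
        * intros [tau [Hl H]]. pose proof (proj1 (Hs (Sp n)) tau Hl) as Ht.
          exists (exist _ tau Ht). split; auto. split; auto. apply IHpsi. exact H.
    - destruct s; cbn [t2 psat ssat].
      + split.
        * intros H tau Hl. apply Hstar in Hl. specialize (H (exist _ tau Hl) I).
          rewrite IHpsi in H. exact H.
        * intros H x' _. apply IHpsi. apply H. apply Hstar. apply proj2_sig.
      + split.
        * intros H tau Hl. pose proof (proj1 (Hs (Sp n)) tau Hl) as Ht.
          specialize (H (exist _ tau Ht) I). rewrite psat_pimp, IHpsi in H. simpl in H. auto.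
        * intros H x' _. apply psat_pimp. rewrite IHpsi. simpl. auto.
    - simpl. apply IHpsi.
    - simpl. split.
      + intros [n' [H1 [H2 H3]]]. exists n'. rewrite IHpsi2 in H2. split; auto. split; auto.
        intros; apply IHpsi1; auto.
      + intros [n' [H1 [H2 H3]]]. exists n'. rewrite <- IHpsi2 in H2. split; auto. split; auto.
        intros; apply IHpsi1; auto. }
  split; [repeat split|].
  split.
  - unfold chi. simpl. split.
    + apply psat_bigand. intros f Hf. apply in_map_iff in Hf. destruct Hf as [k [<- _]].
      simpl. destruct (proj2 (Hs (Sp k))) as [tau Hl].
      pose proof (proj1 (Hs (Sp k)) tau Hl) as Ht.
      exists (exist _ tau Ht). split; auto.
    + intros x _. apply psat_bigand. intros f Hf. apply in_map_iff in Hf.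
      destruct Hf as [k [<- _]]. apply psat_por.
      destruct (classic (lam (Sp k) (proj1_sig x))) as [H|H]; [left|right];
        apply psat_pG; intros; simpl; auto.
  - apply main. exact Hsat.
Qed.

Lemma back {W} (R : W -> W -> Prop) L n w (phi : sltl) :
  equivalence_rel R -> psat R L (chi (symbols phi)) n w -> psat R L (t2 phi) n w ->
  sltl_satisfiable phi.
Proof.
  intros [Rr [Rs Rt]] Hchi Ht.
  pose (N := S (mv phi)).
  pose (sg := fun (w':W) (i p : nat) =>
          if p <? N then L (n+i) w' (inl p) else L n w' (inr (p - N))).
  pose (Pi := fun tau => exists w', R w w' /\ tau = sg w').
  pose (lam := fun s tau => match s with Star => Pi tau
     | Sp k => if in_dec Nat.eq_dec k (syms phi)
               then exists w', R w w' /\ tau = sg w' /\ L n w' (inr k) else Pi tau end).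
  destruct Hchi as [Hd Hb].
  assert (HD : forall k, In k (syms phi) -> exists w', R w w' /\ L n w' (inr k)).
  { intros k Hk. rewrite psat_bigand in Hd.
    apply (Hd (PDia (PVar (inr k)))). apply in_map_iff. exists k. split; auto.
    unfold symbols. apply nodup_In. exact Hk. }
  assert (HG : forall w', R w w' -> forall k, In k (syms phi) -> forall m, n <= m ->
             (L m w' (inr k) <-> L n w' (inr k))).
  { intros w' Hr k Hk m Hm. specialize (Hb w' Hr). rewrite psat_bigand in Hb.
    specialize (Hb (por (pG (PVar (inr k))) (pG (PNot (PVar (inr k)))))).
    rewrite psat_por, !psat_pG in Hb.
    destruct Hb as [Hb|Hb].
    - apply in_map_iff. exists k. split; auto. unfold symbols. apply nodup_In. exact Hk.
    - simpl in Hb. split; intros _; apply Hb; lia.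
    - simpl in Hb. split; intros H; exfalso; [apply (Hb m)|apply (Hb n)]; auto; lia. }
  assert (lam_Pi : forall s tau, lam s tau -> Pi tau).
  { intros [|k] tau; simpl; auto. destruct (in_dec Nat.eq_dec k (syms phi)); auto.
    intros [w' [H1 [H2 _]]]. exists w'; auto. }
  assert (sg_var : forall w' i p, p < N -> (sg w' i p <-> L (n+i) w' (inl p))).
  { intros w' i p Hp. unfold sg. rewrite (proj2 (Nat.ltb_lt _ _) Hp). tauto. }
  assert (sg_k : forall w1 w2 k, sg w1 = sg w2 -> (L n w1 (inr k) <-> L n w2 (inr k))).
  { intros w1 w2 k He. pose proof (f_equal (fun f => f 0 (N + k)) He) as H.
    cbv beta in H. unfold sg in H.
    rewrite (proj2 (Nat.ltb_ge _ _) (Nat.le_add_r N k)) in H.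
    replace (N + k - N) with k in H by lia. rewrite H. tauto. }
  assert (atom : forall s, (forall k, In k (stand_syms s) -> In k (syms phi)) ->
     forall i w'', R w w'' -> (psat R L (stand_atom s) (n+i) w'' <-> lam s (sg w''))).
  { intros [|k] Hs i w'' Hr; simpl.
    - split; [intros _; exists w''; auto | tauto].
    - assert (Hk : In k (syms phi)) by (apply Hs; simpl; auto).
      destruct (in_dec Nat.eq_dec k (syms phi)) as [_|C]; [|contradiction].
      rewrite (HG w'' Hr k Hk (n+i)) by lia. split.
      + intros H. exists w''. auto.
      + intros [w3 [H1 [H2 H3]]]. apply (sg_k _ _ k H2). exact H3. }
  assert (main : forall psi, (forall k, In k (syms psi) -> In k (syms phi)) -> mv psi < N ->
     forall i w', R w w' -> (psat R L (t2 psi) (n+i) w' <-> ssat lam psi (sg w') i)).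
  { induction psi; intros Hs Hm i w' Hr.
    - simpl in Hm |- *. rewrite sg_var by exact Hm. tauto.
    - cbn [t2 psat ssat].
      assert (H1 : forall k, In k (stand_syms s) -> In k (syms phi))
        by (intros k Hk; apply Hs; simpl; apply in_or_app; auto).
      assert (H2 : forall k, In k (stand_syms s') -> In k (syms phi))
        by (intros k Hk; apply Hs; simpl; apply in_or_app; auto).
      split.
      + intros H tau Hl. destruct (lam_Pi _ _ Hl) as [w'' [Hr' ->]].
        specialize (H w'' (Rt _ _ _ (Rs _ _ Hr) Hr')). rewrite psat_pimp in H.
        rewrite (atom s H1 i w'' Hr'), (atom s' H2 i w'' Hr') in H. auto.
      + intros H w'' Hr'. assert (Hr2 : R w w'') by eauto.
        apply psat_pimp. rewrite (atom s H1 i w'' Hr2), (atom s' H2 i w'' Hr2). auto.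
    - simpl in Hm |- *. rewrite IHpsi by auto. tauto.
    - simpl in Hm |- *.
      rewrite IHpsi1, IHpsi2 by (auto; try lia; intros k Hk; apply Hs; simpl; apply in_or_app; auto).
      tauto.
    - simpl in Hm.
      assert (Hs' : forall k, In k (syms psi) -> In k (syms phi))
        by (intros k Hk; apply Hs; simpl; apply in_or_app; auto).
      assert (H1 : forall k, In k (stand_syms s) -> In k (syms phi))
        by (intros k Hk; apply Hs; simpl; apply in_or_app; auto).
      destruct s; cbn [t2 psat ssat].
      + split.
        * intros [w'' [Hr' H]]. assert (Hr2 : R w w'') by eauto. exists (sg w''). split.
          -- exists w''; auto.
          -- apply IHpsi; auto.
        * intros [tau [Hl H]]. destruct Hl as [w'' [Hr' ->]]. exists w''. split; [eauto|].
          apply IHpsi; auto.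
      + split.
        * intros [w'' [Hr' [Hk H]]]. assert (Hr2 : R w w'') by eauto. exists (sg w''). split.
          -- exact (proj1 (atom (Sp n0) H1 i w'' Hr2) Hk).
          -- apply IHpsi; auto.
        * intros [tau [Hl H]]. destruct (lam_Pi _ _ Hl) as [w'' [Hr' ->]].
          exists w''. split; [eauto|]. split.
          -- exact (proj2 (atom (Sp n0) H1 i w'' Hr') Hl).
          -- apply IHpsi; auto.
    - simpl in Hm.
      assert (Hs' : forall k, In k (syms psi) -> In k (syms phi))
        by (intros k Hk; apply Hs; simpl; apply in_or_app; auto).
      assert (H1 : forall k, In k (stand_syms s) -> In k (syms phi))
        by (intros k Hk; apply Hs; simpl; apply in_or_app; auto).
      destruct s; cbn [t2 psat ssat].
      + split.
        * intros H tau [w'' [Hr' ->]]. apply IHpsi; eauto.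
        * intros H w'' Hr'. assert (Hr2 : R w w'') by eauto. apply IHpsi; auto.
          apply H. exists w''; auto.
      + split.
        * intros H tau Hl. destruct (lam_Pi _ _ Hl) as [w'' [Hr' ->]].
          specialize (H w'' (Rt _ _ _ (Rs _ _ Hr) Hr')). rewrite psat_pimp in H.
          apply IHpsi; auto. apply H. exact (proj2 (atom (Sp n0) H1 i w'' Hr') Hl).
        * intros H w'' Hr'. assert (Hr2 : R w w'') by eauto. apply psat_pimp. intros Hk.
          apply IHpsi; auto. apply H. exact (proj1 (atom (Sp n0) H1 i w'' Hr2) Hk).
    - simpl in Hm |- *. rewrite <- Nat.add_succ_r. apply IHpsi; auto.
    - simpl in Hm |- *.
      assert (Ha : forall k, In k (syms psi1) -> In k (syms phi))
        by (intros k Hk; apply Hs; simpl; apply in_or_app; auto).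
      assert (Hc : forall k, In k (syms psi2) -> In k (syms phi))
        by (intros k Hk; apply Hs; simpl; apply in_or_app; auto).
      split.
      + intros [n' [H1 [H2 H3]]]. exists (n' - n).
        replace n' with (n + (n' - n)) in H2, H3 by lia.
        split; [lia|]. split.
        * apply IHpsi2; auto. lia.
        * intros j Hj. apply IHpsi1; auto; [lia|]. apply H3. lia.
      + intros [i' [H1 [H2 H3]]]. exists (n + i'). split; [lia|]. split.
        * apply IHpsi2; auto. lia.
        * intros j Hj. replace j with (n + (j - n)) by lia. apply IHpsi1; auto; [lia|].
          apply H3. lia. }
  exists Pi, lam, (sg w). split; [|split].
  - split; [exists (sg w), w; auto|]. split.
    + intros s. split; [apply lam_Pi|]. destruct s as [|k].
      * exists (sg w), w; auto.
      * simpl. destruct (in_dec Nat.eq_dec k (syms phi)) as [Hk|Hk].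
        -- destruct (HD k Hk) as [w' [H1 H2]]. exists (sg w'), w'; auto.
        -- exists (sg w), w; auto.
    + intros tau. simpl. tauto.
  - exists w; auto.
  - apply (main phi (fun k Hk => Hk) ltac:(unfold N; lia) 0 w (Rr w)). rewrite Nat.add_0_r. exact Ht.
Qed.

Theorem lemma2 (phi : sltl) :
  sltl_satisfiable phi <-> ptl_satisfiable (PAnd (chi (symbols phi)) (t2 phi)).
Proof.
  split; [apply fwd|].
  intros (W & R & L & n & w & He & [H1 H2]). exact (back R L n w phi He H1 H2).
Qed.
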